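(* Let $G$ be a bipartite graph with bipartition $(X,Y)$, $|X| = n\geq 2$, $|Y|=m$, every $x\in X$ having degree at least $\delta$. Let $(C,x)$ be a tight pair in $G$, with $C = y_1x_1y_2x_2\ldots y_\ell x_\ell y_1$ where $x_i \in X$, $y_i\in Y$. If $i \neq j$ and $y_i, y_j \in N(x)$, then $N(x_i)\setminus V(C)$ and $N(x_j)\setminus V(C)$ are disjoint.
   Context: A tight pair in $G$ is a pair $(C,x)$ where $C$ is a longest cycle in $G$ and $x \in X \setminus V(C)$, chosen such that $|N(x)\cap V(C)|$ is maximum over all pairs $(C',x')$ with $C'$ a longest cycle in $G$ and $x' \in X\setminus V(C')$. *)

(* Defs.v *)
From mathcomp Require Import all_boot.
Set Implicit Arguments. Unset Strict Implicit. Unset Printing Implicit Defensive.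

Section Graphs.
Variable T : finType.
Variable e : rel T.

Definition simple_graph : Prop := symmetric e /\ irreflexive e.

Definition bipartition (X Y : {set T}) : Prop :=
  [/\ X :&: Y = set0, X :|: Y = [set: T] &
      forall u v, e u v -> (u \in X) && (v \in Y) || (u \in Y) && (v \in X)].

Definition N (v : T) : {set T} := [set u | e v u].

Definition VC (c : seq T) : {set T} := [set u | u \in c].

Definition is_cycle (c : seq T) : bool :=
  [&& uniq c, cycle e c & 3 <= size c].

Definition longest_cycle (c : seq T) : Prop :=
  is_cycle c /\ forall c', is_cycle c' -> size c' <= size c.

Definition tight_pair (X : {set T}) (C : seq T) (x : T) : Prop :=
  [/\ longest_cycle C, x \in X, x \notin VC C &
      forall C' x', longest_cycle C' -> x' \in X -> x' \notin VC C' ->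
        #|N x' :&: VC C'| <= #|N x :&: VC C| ].

End Graphs.

(* Main.v *)
Require Import Defs.
From mathcomp Require Import all_boot.
From mathcomp Require Import zify.


Lemma key (T : finType) (e : rel T) (Hs : symmetric e) (B D : seq T) (x z : T)
  (HB : B != [::]) (HD : D != [::]) (Hu : uniq (B ++ D)) (Hc : cycle e (B ++ D))
  (Hz : z \notin B ++ D) (Hx : x \notin B ++ D) (Hzx : z != x)
  (E1 : e z (nth x B 0)) (E2 : e (nth x B (size B).-1) x)
  (E3 : e x (nth x D (size D).-1)) (E4 : e (nth x D 0) z) :
  is_cycle e (z :: B ++ x :: rev D).
Proof.
apply/and3P; split.
- have P : perm_eq (z :: B ++ x :: rev D) (z :: x :: (B ++ D)).
    rewrite perm_cons -cat1s perm_catCA /= perm_cons perm_cat2l.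
    by rewrite perm_rev.
  by rewrite (perm_uniq P) /= inE negb_or Hzx Hz Hx Hu.
- clear -Hs HB HD Hc E1 E2 E3 E4; case: B HB Hc E1 E2 => [|b0 B1] // _ Hc E1 E2.
  case: D HD Hc E3 E4 => [|d0 D1] // _ Hc E3 E4.
  rewrite !nth_last /= in E1 E2 E3 E4.
  move: Hc; rewrite /= rcons_path last_cat /= cat_path /= => /andP[/and3P[P1 E5 P2] E6].
  rewrite E1 /= -cats1 -catA cat_path P1 /= E2 /= cats1.
  rewrite lastI rev_rcons /= rcons_path E3 /=.
  have -> : last (last d0 D1) (rev (belast d0 D1)) = d0.
    by rewrite -[last _ (rev _)]/(last d0 (last d0 D1 :: rev (belast d0 D1))) -rev_rcons -lastI rev_cons last_rcons.
  rewrite E4 andbT rev_path.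
  by rewrite -(eq_path (e := e)) // => a b; rewrite Hs.
- clear -HB HD; case: B HB => // b B _; rewrite /= size_cat /= size_rev; case: D HD => // d D _ /=; by rewrite !addnS.
Qed.

(* C = y_1 x_1 y_2 x_2 ... y_l x_l is the sequence C; with 0-based
   indices, y_(i+1) = nth x C (2*i) and x_(i+1) = nth x C (2*i+1),
   for i < l = size C / 2. *)
Theorem claim2 (T : finType) (e : rel T) (X Y : {set T}) (n m delta : nat)
  (Hsimple : simple_graph e) (Hbip : bipartition e X Y)
  (Hn : #|X| = n) (Hn2 : 2 <= n) (Hm : #|Y| = m)
  (Hdeg : forall v, v \in X -> delta <= #|N e v|)
  (C : seq T) (x : T) (Htight : tight_pair e X C x)
  (Halt : forall k, k < size C -> (nth x C k \in Y) = ~~ odd k)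
  (i j : nat) (Hi : i < size C %/ 2) (Hj : j < size C %/ 2) (Hij : i != j)
  (Hyi : nth x C (2 * i) \in N e x) (Hyj : nth x C (2 * j) \in N e x) :
  [disjoint (N e (nth x C (2 * i).+1) :\: VC C)
          & (N e (nth x C (2 * j).+1) :\: VC C)].
Proof.
clear Hn Hm Hdeg Hn2.
case: Hsimple => Hs Hirr.
case: Hbip => HXY HXuY Hed.
case: Htight => [[HC Hlong] HxX HxC _].
move: HC => /and3P[HCu HCc HC3].
wlog lt_ij : i j Hi Hj Hij Hyi Hyj / i < j.
  move=> W; case: (ltngtP i j) => h.
  - exact: W.
  - by rewrite disjoint_sym; apply: W => //; rewrite eq_sym.
  - by rewrite h eqxx in Hij.
rewrite -setI_eq0; apply/eqP/setP => w; rewrite !inE.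
apply/negP => /andP[/andP[wC ew1] /andP[_ ew2]].
set a := 2 * i in Hyi ew1 *; set b := 2 * j in Hyj ew2 *.
have hb : b.+1 < size C.
  rewrite /b; clear -Hj; lia.
have hab : a < b by rewrite /a /b; clear -lt_ij; lia.
set L := drop a.+1 C; set R := take a.+1 C.
set B := take (b - a) L; set D := drop (b - a) L ++ R.
have sL : size L = size C - a.+1 by rewrite size_drop.
have sR : size R = a.+1 by rewrite size_take ifT //; (clear -hab hb; lia).
have sB : size B = b - a by rewrite size_take sL ifT //; clear -hab hb; lia.
have Erot : rot a.+1 C = B ++ D by rewrite /rot catA cat_take_drop.
have wX : (nth x C b.+1) \in X.
  have : nth x C b.+1 \notin Y by rewrite Halt //= negbK /b oddM.
  apply: contraR => hX.
  have : nth x C b.+1 \in [set: T] by [].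
  by rewrite -HXuY in_setU (negbTE hX).
have wY : w \in Y.
  have := Hed _ _ ew2; rewrite wX /=.
  case/orP => // /andP[hY _].
  have : nth x C b.+1 \in X :&: Y by rewrite in_setI wX hY.
  by rewrite HXY inE.
have wx : w != x.
  apply/eqP => wx; subst w.
  have : x \in X :&: Y by rewrite in_setI HxX wY.
  by rewrite HXY inE.
have Hk := @key T e Hs B D x w.
have : is_cycle e (w :: B ++ x :: rev D).
  have sdL : size (drop (b - a) L) = size C - b.+1 by rewrite size_drop sL; (clear -hab hb; lia).
  have sD : size D = size C - (b - a) by rewrite size_cat sdL sR; (clear -hab hb; lia).
  apply: Hk.
  - by rewrite -size_eq0 sB; (clear -hab hb; lia).
  - by rewrite -size_eq0 size_cat sR addnS.
  - by rewrite -Erot rot_uniq.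
  - by rewrite -Erot rot_cycle.
  - by rewrite -Erot mem_rot.
  - by rewrite -Erot mem_rot; move: HxC; rewrite inE.
  - exact: wx.
  - rewrite nth_take; last by (clear -hab hb; lia).
    by rewrite nth_drop addn0 Hs.
  - rewrite sB nth_take; last by (clear -hab hb; lia).
    rewrite nth_drop Hs.
    have -> : a.+1 + (b - a).-1 = b by (clear -hab hb; lia).
    by move: Hyj; rewrite inE.
  - rewrite nth_cat sdL sD ifF; last by (clear -hab hb; lia).
    rewrite nth_take; last by (clear -hab hb; lia).
    have -> : (size C - (b - a)).-1 - (size C - b.+1) = a by (clear -hab hb; lia).
    by move: Hyi; rewrite inE.
  - rewrite nth_cat sdL ifT; last by (clear -hab hb; lia).
    rewrite !nth_drop addn0.
    by have -> : a.+1 + (b - a) = b.+1 by (clear -hab hb; lia).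
move/Hlong; rewrite /= size_cat /= size_rev.
have := size_rot a.+1 C; rewrite Erot size_cat => <-.
(clear -hab hb; lia).
Qed.
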